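(* If $\sum_{i=1}^M b_i<1$, then for every $\epsilon>0$, $$\bar\Delta_{\mathrm{opt}}(\epsilon)\ge\bar\Delta_{\mathrm{opt},2}(\epsilon)\ge\sum_{l=1}^M\frac{w_l}{b_l}\exp\!\Big(-\frac{\sum_{i=1}^M b_i}{1-\sum_{i=1}^M b_i}\,\epsilon\Big)+\sum_{l=1}^M w_l.$$
   Context: Fix an integer $M\ge1$, weights $w_1,\dots,w_M>0$, constants $b_1,\dots,b_M>0$, and $\epsilon>0$. For $\mathbf r\in(0,\infty)^M$ write $S(\mathbf r)=\sum_{i=1}^M r_i$ and define $$\bar\Delta(\mathbf r)=\sum_{l=1}^M \frac{w_l e^{-r_l\epsilon}}{r_l}\, e^{\epsilon S(\mathbf r)}\big(1+S(\mathbf r)\big)+\sum_{l=1}^M w_l,\qquad \sigma_l(\mathbf r)=\frac{(1-e^{-r_l\epsilon})S(\mathbf r)+r_le^{-r_l\epsilon}}{S(\mathbf r)+1}.$$ Problem 1: minimize $\bar\Delta(\mathbf r)$ over $\mathbf r\in(0,\infty)^M$ subject to $\sigma_l(\mathbf r)\le b_l$ for all $l$; its optimal (infimum) value is $\bar\Delta_{\mathrm{opt}}(\epsilon)$. Problem 2: minimize $\bar\Delta(\mathbf r)$ over $\mathbf r\in(0,\infty)^M$ subject to $r_l\le b_l\big(S(\mathbf r)+1\big)$ for all $l$; its optimal (infimum) value is $\bar\Delta_{\mathrm{opt},2}(\epsilon)$. *)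

(* Defs.v *)
From Stdlib Require Import Reals Lra.
Open Scope R_scope.

(* Indices 1..M of the paper are represented as 0..M-1; vectors are nat -> R. *)
Fixpoint rsum (n : nat) (f : nat -> R) : R :=
  match n with
  | O => 0
  | S k => rsum k f + f k
  end.

Definition Ssum (M : nat) (r : nat -> R) : R := rsum M r.

Definition Dbar (M : nat) (w : nat -> R) (eps : R) (r : nat -> R) : R :=
  rsum M (fun l => w l * exp (- (r l * eps)) / r l
                   * exp (eps * Ssum M r) * (1 + Ssum M r))
  + rsum M w.

Definition sigma (M : nat) (eps : R) (r : nat -> R) (l : nat) : R :=
  ((1 - exp (- (r l * eps))) * Ssum M r + r l * exp (- (r l * eps)))
  / (Ssum M r + 1).

Definition positive_vec (M : nat) (r : nat -> R) : Prop :=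
  forall i, (i < M)%nat -> 0 < r i.

Definition feasible1 (M : nat) (b : nat -> R) (eps : R) (r : nat -> R) : Prop :=
  positive_vec M r /\ forall l, (l < M)%nat -> sigma M eps r l <= b l.

Definition feasible2 (M : nat) (b : nat -> R) (r : nat -> R) : Prop :=
  positive_vec M r /\ forall l, (l < M)%nat -> r l <= b l * (Ssum M r + 1).

Definition values1 (M : nat) (w b : nat -> R) (eps : R) (v : R) : Prop :=
  exists r, feasible1 M b eps r /\ v = Dbar M w eps r.

Definition values2 (M : nat) (w b : nat -> R) (eps : R) (v : R) : Prop :=
  exists r, feasible2 M b r /\ v = Dbar M w eps r.

Definition is_glb (E : R -> Prop) (m : R) : Prop :=
  (forall x, E x -> m <= x) /\
  (forall m', (forall x, E x -> m' <= x) -> m' <= m).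

(* Main.v *)
Require Import Defs.
From Stdlib Require Import Reals Lra Lia.
Open Scope R_scope.

Lemma rsum_le n f g : (forall i, (i < n)%nat -> f i <= g i) -> rsum n f <= rsum n g.
Proof. induction n; simpl; intros H. lra.
  assert (rsum n f <= rsum n g) by (apply IHn; intros; apply H; lia).
  assert (f n <= g n) by (apply H; lia). lra. Qed.

Lemma rsum_mulr n f c : rsum n f * c = rsum n (fun i => f i * c).
Proof. induction n; simpl. ring. rewrite <- IHn. ring. Qed.

Lemma rsum_ge_term n f l : (forall i, (i < n)%nat -> 0 <= f i) -> (l < n)%nat -> f l <= rsum n f.
Proof. induction n; simpl; intros H Hl. lia.
  assert (0 <= rsum n f).
  { clear IHn Hl. assert (rsum n (fun _ => 0) <= rsum n f) by (apply rsum_le; intros; apply H; lia).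
    assert (rsum n (fun _ => 0) = 0) by (clear; induction n; simpl; lra). lra. }
  destruct (Nat.eq_dec l n) as [->|Hne].
  - lra.
  - assert (f l <= rsum n f) by (apply IHn; [intros; apply H; lia | lia]).
    assert (0 <= f n) by (apply H; lia). lra. Qed.

Lemma exp_mono x y : x <= y -> exp x <= exp y.
Proof. intros [H|H]. left; apply exp_increasing; auto. subst; lra. Qed.

Theorem lemma6 (M : nat) (w b : nat -> R) (eps : R) :
  (1 <= M)%nat ->
  (forall i, (i < M)%nat -> 0 < w i) ->
  (forall i, (i < M)%nat -> 0 < b i) ->
  0 < eps ->
  rsum M b < 1 ->
  forall Dopt Dopt2 : R,
    is_glb (values1 M w b eps) Dopt ->
    is_glb (values2 M w b eps) Dopt2 ->
    Dopt >= Dopt2 /\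
    Dopt2 >= rsum M (fun l => w l / b l)
               * exp (- (rsum M b / (1 - rsum M b) * eps))
             + rsum M w.
Proof.
  intros HM Hw Hb Heps HB Dopt Dopt2 [G1a G1b] [G2a G2b].
  assert (HBpos : 0 <= rsum M b).
  { apply Rle_trans with (b 0%nat). left; apply Hb; lia.
    apply rsum_ge_term; [intros; left; apply Hb; auto | lia]. }
  split.
  - apply Rle_ge, G1b. intros x [r [[Hpos Hs] ->]]. apply G2a.
    exists r; split; [split; auto|reflexivity].
    intros l Hl. specialize (Hs l Hl). unfold Defs.sigma in Hs.
    set (S := Ssum M r) in *.
    assert (HrS : r l <= S) by (apply rsum_ge_term; [intros; left; apply Hpos; auto|auto]).
    assert (HrP := Hpos l Hl).
    set (e := exp (- (r l * eps))) in *.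
    assert (He1 : e <= 1). { unfold e. apply Rle_trans with (exp 0); [apply exp_mono | rewrite exp_0; lra].
      assert (0 <= r l * eps) by (apply Rmult_le_pos; lra). lra. }
    assert (HS1 : 0 < S + 1) by lra.
    apply Rmult_le_compat_r with (r := S + 1) in Hs; [|lra].
    replace (((1 - e) * S + r l * e) / (S + 1) * (S + 1)) with ((1 - e) * S + r l * e) in Hs by (field; lra).
    assert (r l * (1 - e) <= S * (1 - e)) by (apply Rmult_le_compat_r; lra).
    assert (HH : r l = r l * (1 - e) + r l * e) by ring.
    assert (HH2 : (1 - e) * S = S * (1 - e)) by ring.
    assert (HH3 : b l * (Ssum M r + 1) = b l * (S + 1)) by reflexivity. lra.
  - set (c := exp (- (rsum M b / (1 - rsum M b) * eps))).
    assert (Hc : c <= 1). { unfold c. apply Rle_trans with (exp 0); [apply exp_mono | rewrite exp_0; lra].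
      assert (0 <= rsum M b / (1 - rsum M b)) by (unfold Rdiv; apply Rmult_le_pos; [lra | left; apply Rinv_0_lt_compat; lra]).
      assert (0 <= rsum M b / (1 - rsum M b) * eps) by (apply Rmult_le_pos; lra). lra. }
    apply Rle_ge, G2b. intros x [r [[Hpos Hs] ->]]. unfold Dbar.
    apply Rplus_le_compat_r. rewrite rsum_mulr. apply rsum_le. intros l Hl.
    set (S := Ssum M r) in *.
    assert (HrS : r l <= S) by (apply rsum_ge_term; [intros; left; apply Hpos; auto|auto]).
    assert (HrP := Hpos l Hl). assert (HwP := Hw l Hl). assert (HbP := Hb l Hl).
    specialize (Hs l Hl).
    assert (HE : 1 <= exp (- (r l * eps)) * exp (eps * S)).
    { rewrite <- exp_plus, <- exp_0.
      destruct (Req_dec (- (r l * eps) + eps * S) 0) as [E|E]. rewrite E; lra.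
      left; apply exp_increasing. nra. }
    assert (H1 : w l / b l * c <= w l / b l).
    { assert (0 < w l / b l) by (apply Rdiv_lt_0_compat; lra). nra. }
    assert (H2 : w l / b l <= w l * (1 + S) / r l).
    { unfold Rdiv. apply Rmult_le_reg_r with (r := b l * r l). nra.
      replace (w l * / b l * (b l * r l)) with (w l * r l) by (field; lra).
      replace (w l * (1 + S) * / r l * (b l * r l)) with (w l * (b l * (S + 1))) by (field; lra).
      apply Rmult_le_compat_l; lra. }
    assert (H3 : w l * (1 + S) / r l <=
                 w l * exp (- (r l * eps)) / r l * exp (eps * S) * (1 + S)).
    { replace (w l * exp (- (r l * eps)) / r l * exp (eps * S) * (1 + S))
        with ((exp (- (r l * eps)) * exp (eps * S)) * (w l * (1 + S) / r l)) by (field; lra).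
      assert (0 < w l * (1 + S) / r l) by (apply Rdiv_lt_0_compat; nra). nra. }
    lra.
Qed.
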